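(* Let $A,B,A',B'$ be finite-dimensional physical systems with $|A||B|=|A'||B'|$, and let $\mathcal{U}(X)=UXU^*$ be a unitary channel from $AB$ to $A'B'$ that is Gibbs preserving, i.e. $\mathcal{U}(\gamma^{A}\otimes\gamma^{B})=\gamma^{A'}\otimes\gamma^{B'}$. Then the map defined for all states $\omega$ of $A$ by $$\mathcal{N}^{A\to A'}(\omega^A)\coloneqq \mathrm{Tr}_{B'}\left[\mathcal{U}^{AB\to A'B'}\left(\omega^A\otimes\gamma^B\right)\right]$$ is a thermal operation from $A$ to $A'$.
   Context: Every physical system $X$ is finite dimensional and has a Hamiltonian $H^X$ (a Hermitian, positive semidefinite operator); composite systems of non-interacting parts have Hamiltonian $H^{XY}=H^X\otimes I^Y+I^X\otimes H^Y$. A fixed inverse temperature $\beta>0$ is given, and the Gibbs state of $X$ is $\gamma^X=e^{-\beta H^X}/\mathrm{Tr}[e^{-\beta H^X}]$ (so $\gamma^{XY}=\gamma^X\otimes\gamma^Y$). A thermal operation from $A$ to $A'$ is a quantum channel (CPTP map) obtainable by composing the following three steps: (i) appending any system $C$ prepared in its Gibbs state $\gamma^C$; (ii) applying a unitary on a composite system that commutes with the total Hamiltonian of that composite system; (iii) tracing out (discarding) subsystems. *)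

(* Defs.v *)
From HB Require Import structures.
From mathcomp Require Import all_boot all_order all_algebra.
From mathcomp Require Import complex.
From mathcomp Require mxtens.
From mathcomp Require Import reals.
From mathcomp Require Import sequences.

Set Implicit Arguments.
Unset Strict Implicit.
Unset Printing Implicit Defensive.

Import Order.TTheory GRing.Theory Num.Theory.
Local Open Scope ring_scope.
Local Open Scope complex_scope.

Section Thermal.
Variable R : realType.
Local Notation C := R[i].

Definition adj m n (X : 'M[C]_(m, n)) : 'M[C]_(n, m) := (X ^t* )%sesqui.

Definition unitary_op m n (U : 'M[C]_(m, n)) : Prop :=
  U *m adj U = 1%:M /\ adj U *m U = 1%:M.

Definition psd n (X : 'M[C]_n) : Prop :=
  forall v : 'rV[C]_n, 0 <= (v *m X *m adj v) 0 0.

Definition is_state n (X : 'M[C]_n) : Prop :=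
  X \is hermsymmx /\ psd X /\ \tr X = 1.

(* tensor product (Kronecker product, index (i,k) |-> i * n + k) *)
Definition tens m n (X : 'M[C]_m) (Y : 'M[C]_n) : 'M[C]_(m * n) :=
  mxtens.tensmx X Y.

Local Notation idx := mxtens.mxtens_index.
Local Notation unidx := mxtens.mxtens_unindex.

Definition ptrace2 m n (X : 'M[C]_(m * n)) : 'M[C]_m :=
  \matrix_(i, j) \sum_(k < n) X (idx (i, k)) (idx (j, k)).

Definition ptrace1 m n (X : 'M[C]_(m * n)) : 'M[C]_n :=
  \matrix_(i, j) \sum_(k < m) X (idx (k, i)) (idx (k, j)).

(* relabelling of the factors of a composite system:
   X ⊗ Y  ~>  Y ⊗ X  and  (X ⊗ Y) ⊗ Z  ~>  X ⊗ (Y ⊗ Z) (and back) *)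
Definition swap_ix m n (k : 'I_(n * m)) : 'I_(m * n) :=
  idx ((unidx k).2, (unidx k).1).
Definition swapmx m n (X : 'M[C]_(m * n)) : 'M[C]_(n * m) :=
  \matrix_(i, j) X (swap_ix i) (swap_ix j).

Definition assoc_ix m n p (k : 'I_(m * (n * p))) : 'I_((m * n) * p) :=
  let: (x, yz) := unidx k in let: (y, z) := unidx yz in idx (idx (x, y), z).
Definition assocmx m n p (X : 'M[C]_((m * n) * p)) : 'M[C]_(m * (n * p)) :=
  \matrix_(i, j) X (assoc_ix i) (assoc_ix j).

Definition unassoc_ix m n p (k : 'I_((m * n) * p)) : 'I_(m * (n * p)) :=
  let: (xy, z) := unidx k in let: (x, y) := unidx xy in idx (x, idx (y, z)).
Definition unassocmx m n p (X : 'M[C]_(m * (n * p))) : 'M[C]_((m * n) * p) :=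
  \matrix_(i, j) X (unassoc_ix i) (unassoc_ix j).

Record hsys := HSys {
  hdim : nat;
  hdim_gt0 : (0 < hdim)%N;
  hmat : 'M[C]_hdim;
  hmat_herm : hmat \is hermsymmx;
  hmat_psd : psd hmat }.

Inductive sys := Atom of hsys | Pair of sys & sys.

Fixpoint dim (s : sys) : nat :=
  match s with Atom a => hdim a | Pair s t => (dim s * dim t)%N end.

Fixpoint ham (s : sys) : 'M[C]_(dim s) :=
  match s return 'M[C]_(dim s) with
  | Atom a => hmat a
  | Pair s t => tens (ham s) 1%:M + tens 1%:M (ham t)
  end.

Variable beta : R.

(* e^{-beta H} for a Hermitian H, by functional calculus on the spectral
   decomposition H = P^{-1} diag(d) P (P unitary, d real) *)
Definition expmbeta n (H : 'M[C]_n) : 'M[C]_n :=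
  let P := spectralmx H in
  let d := spectral_diag H in
  invmx P *m diag_mx (\row_i ((expR (- beta * @complex.Re R (d 0 i)))%:C)) *m P.

Definition gibbs n (H : 'M[C]_n) : 'M[C]_n :=
  (\tr (expmbeta H))^-1 *: expmbeta H.

Definition gibbs_of (s : sys) : 'M[C]_(dim s) := gibbs (ham s).

Unset Implicit Arguments.

(* elementary steps: (i) append a system in its Gibbs state,
   (ii) a unitary on a (composite) system commuting with its total
   Hamiltonian, (iii) trace out a subsystem; plus the bookkeeping
   identifications of a composite system with its reordered /
   rebracketed presentation. *)
Inductive step : forall s t : sys, ('M[C]_(dim s) -> 'M[C]_(dim t)) -> Prop :=
  | step_append (s c : sys) :
      step s (Pair s c) (fun X => tens X (gibbs_of c))
  | step_unitary (s : sys) (V : 'M[C]_(dim s)) :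
      unitary_op V -> V *m ham s = ham s *m V ->
      step s s (fun X => V *m X *m adj V)
  | step_trace2 (s t : sys) : step (Pair s t) s (@ptrace2 (dim s) (dim t))
  | step_trace1 (s t : sys) : step (Pair s t) t (@ptrace1 (dim s) (dim t))
  | step_swap (s t : sys) : step (Pair s t) (Pair t s) (@swapmx (dim s) (dim t))
  | step_assoc (s t u : sys) :
      step (Pair (Pair s t) u) (Pair s (Pair t u)) (@assocmx (dim s) (dim t) (dim u))
  | step_unassoc (s t u : sys) :
      step (Pair s (Pair t u)) (Pair (Pair s t) u) (@unassocmx (dim s) (dim t) (dim u)).

Inductive thermal_op : forall s t : sys, ('M[C]_(dim s) -> 'M[C]_(dim t)) -> Prop :=
  | thermal_id (s : sys) : thermal_op s s id
  | thermal_cons (s t u : sys) (f : 'M[C]_(dim s) -> 'M[C]_(dim t))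
      (g : 'M[C]_(dim t) -> 'M[C]_(dim u)) :
      thermal_op s t f -> step t u g -> thermal_op s u (g \o f).

Set Implicit Arguments.

End Thermal.

Arguments step {R} beta s t _.
Arguments thermal_op {R} beta s t _.

(* Main.v *)
Require Import Defs.
From HB Require Import structures.
From mathcomp Require Import all_boot all_order all_algebra.
From mathcomp Require Import complex.
From mathcomp Require mxtens.
From mathcomp Require Import reals exp sequences.
From mathcomp Require Import ring.
Set Implicit Arguments.
Unset Strict Implicit.
Unset Printing Implicit Defensive.
Import Order.TTheory GRing.Theory Num.Theory.
Local Open Scope ring_scope.
Local Open Scope complex_scope.

Section H.
Variable R : realType.
Local Notation C := R[i].
Local Notation idx := mxtens.mxtens_index.
Local Notation unidx := mxtens.mxtens_unindex.

Lemma adjE m n (X : 'M[C]_(m,n)) i j : adj X i j = (X j i)^*%R.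
Proof. by rewrite /adj !mxE. Qed.

Lemma adj_mul m n p (X : 'M[C]_(m,n)) (Y : 'M[C]_(n,p)) : adj (X *m Y) = adj Y *m adj X.
Proof. by rewrite /adj trmx_mul map_mxM. Qed.

Lemma adjK m n (X : 'M[C]_(m,n)) : adj (adj X) = X.
Proof. by rewrite /adj trmxCK. Qed.

Lemma adj_tens m n p q (X : 'M[C]_(m,n)) (Y : 'M[C]_(p,q)) :
  adj (mxtens.tensmx X Y) = mxtens.tensmx (adj X) (adj Y).
Proof. by apply/matrixP => i j; rewrite !mxE rmorphM. Qed.

Lemma idx_eq m n (a b : 'I_m * 'I_n) : (idx a == idx b) = (a == b).
Proof. exact: (can_eq (@mxtens.mxtens_indexK m n)). Qed.

Lemma tens11 m n : mxtens.tensmx (1%:M : 'M[C]_m) (1%:M : 'M[C]_n) = 1%:M.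
Proof.
apply/matrixP => i j.
case: (mxtens.mxtens_indexP i) => i1 i2; case: (mxtens.mxtens_indexP j) => j1 j2.
rewrite mxtens.tensmxE !mxE idx_eq xpair_eqE.
by case: (i1 == j1); case: (i2 == j2); rewrite /= ?mulr1 ?mulr0 ?mul0r.
Qed.

Lemma real_C (z : C) : z \is Num.real -> z = (complex.Re z)%:C.
Proof.
case: z => a b; rewrite realE !lecE /= => /orP[] /andP[/eqP hb _].
  by rewrite hb.
by rewrite -hb.
Qed.

Definition pmx a b (sw : 'I_a -> 'I_b) : 'M[C]_(a,b) := \matrix_(i,j) ((sw i == j)%:R).

Lemma pmx_mull a b c (sw : 'I_a -> 'I_b) (M : 'M[C]_(b,c)) i j :
  (pmx sw *m M) i j = M (sw i) j.
Proof.
rewrite mxE (bigD1 (sw i)) //= mxE eqxx mul1r big1 ?addr0 // => k nk.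
by rewrite mxE eq_sym (negbTE nk) mul0r.
Qed.

Lemma mul_pmx a b c (sw : 'I_a -> 'I_b) sw' (h1 : cancel sw sw') (h2 : cancel sw' sw)
  (M : 'M[C]_(c,a)) i j : (M *m pmx sw) i j = M i (sw' j).
Proof.
rewrite mxE (bigD1 (sw' j)) //= mxE h2 eqxx mulr1 big1 ?addr0 // => k nk.
rewrite mxE; case: eqP => [e|]; last by rewrite mulr0.
by case/eqP: nk; rewrite -e h1.
Qed.

Lemma adj_pmx a b (sw : 'I_a -> 'I_b) sw' (h1 : cancel sw sw') (h2 : cancel sw' sw) :
  adj (pmx sw) = pmx sw'.
Proof.
apply/matrixP => i j; rewrite adjE !mxE rmorph_nat.
suff -> : (sw j == i) = (sw' i == j) by [].
by apply/eqP/eqP => [<-|<-]; rewrite ?h1 ?h2.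
Qed.

Lemma swap_idx m n (a : 'I_m) (b : 'I_n) : swap_ix (idx (a,b)) = idx (b,a).
Proof. by rewrite /swap_ix mxtens.mxtens_indexK. Qed.

Lemma swapK m n : cancel (@swap_ix m n) (@swap_ix n m).
Proof. by move=> k; case: (mxtens.mxtens_indexP k) => a b; rewrite !swap_idx. Qed.

Lemma pmx_unit a b (sw : 'I_a -> 'I_b) sw' (h1 : cancel sw sw') (h2 : cancel sw' sw) :
  pmx sw *m pmx sw' = 1%:M.
Proof.
apply/matrixP => i j; rewrite pmx_mull !mxE; congr (_ %:R).
by rewrite h1.
Qed.

Lemma tens_scale m n p q (c d : C) (X : 'M[C]_(m,n)) (Y : 'M[C]_(p,q)) :
  mxtens.tensmx (c *: X) (d *: Y) = (c * d) *: mxtens.tensmx X Y.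
Proof. by apply/matrixP => i j; rewrite !mxE mulrACA. Qed.

Lemma tr_tens m n (X : 'M[C]_m) (Y : 'M[C]_n) :
  \tr (mxtens.tensmx X Y) = \tr X * \tr Y.
Proof.
rewrite /mxtrace mxtens.mulr_sum; apply: eq_bigr => k _.
by case: (mxtens.mxtens_indexP k) => a b; rewrite mxtens.tensmxE mxtens.mxtens_indexK.
Qed.

Lemma sum_idx m n (F : 'I_(m * n) -> C) :
  \sum_(k < m * n) F k = \sum_(a < m) \sum_(b < n) F (idx (a, b)).
Proof.
rewrite pair_big /= (reindex (@mxtens.mxtens_index m n)) //=.
  by apply: eq_bigr => -[a b].
by exists (@mxtens.mxtens_unindex m n) => k _; rewrite ?mxtens.mxtens_indexK ?mxtens.mxtens_unindexK.
Qed.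

Lemma ptrace1_tens m n (X : 'M[C]_m) (Y : 'M[C]_n) :
  ptrace1 (tens X Y) = \tr X *: Y.
Proof.
apply/matrixP => i j; rewrite !mxE /mxtrace mulr_suml; apply: eq_bigr => k _.
by rewrite /tens mxtens.tensmxE.
Qed.

Lemma assoc_tens m n p (X : 'M[C]_m) (Y : 'M[C]_n) (Z : 'M[C]_p) :
  assocmx (tens (tens X Y) Z) = tens X (tens Y Z).
Proof.
apply/matrixP => i j.
case: (mxtens.mxtens_indexP i) => a bc; case: (mxtens.mxtens_indexP j) => a' bc'.
case: (mxtens.mxtens_indexP bc) => b c; case: (mxtens.mxtens_indexP bc') => b' c'.
rewrite mxE /assoc_ix !mxtens.mxtens_indexK /tens !mxtens.tensmxE.
by rewrite mulrA.
Qed.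

Lemma diag_tens m n (x : 'rV[C]_m) (y : 'rV[C]_n) :
  mxtens.tensmx (diag_mx x) (diag_mx y) =
  diag_mx (\row_k (x 0 (unidx k).1 * y 0 (unidx k).2)).
Proof.
apply/matrixP => i j.
case: (mxtens.mxtens_indexP i) => a b; case: (mxtens.mxtens_indexP j) => a' b'.
rewrite mxtens.tensmxE !mxE mxtens.mxtens_indexK idx_eq xpair_eqE /=.
by case: (a == a'); case: (b == b'); rewrite /= ?mulr1n ?mulr0n ?mulr0 ?mul0r.
Qed.

Lemma tens_mul m n p q r s (A : 'M[C]_(m,n)) (B : 'M[C]_(p,q)) (C' : 'M[C]_(n, r)) (D : 'M[C]_(q, s)) :
  mxtens.tensmx A B *m mxtens.tensmx C' D = mxtens.tensmx (A *m C') (B *m D).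
Proof. exact: mxtens.tensmx_mul. Qed.

Lemma tensDl m n p q (A B : 'M[C]_(m,n)) (D : 'M[C]_(p,q)) :
  mxtens.tensmx (A + B) D = mxtens.tensmx A D + mxtens.tensmx B D.
Proof. by apply/matrixP => i j; rewrite !mxE mulrDl. Qed.
Lemma tensDr m n p q (A B : 'M[C]_(m,n)) (D : 'M[C]_(p,q)) :
  mxtens.tensmx D (A + B) = mxtens.tensmx D A + mxtens.tensmx D B.
Proof. by apply/matrixP => i j; rewrite !mxE mulrDr. Qed.
Lemma tensZl m n p q (a : C) (A : 'M[C]_(m,n)) (D : 'M[C]_(p,q)) :
  mxtens.tensmx (a *: A) D = a *: mxtens.tensmx A D.
Proof. by apply/matrixP => i j; rewrite !mxE mulrA. Qed.
Lemma tensZr m n p q (a : C) (A : 'M[C]_(m,n)) (D : 'M[C]_(p,q)) :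
  mxtens.tensmx D (a *: A) = a *: mxtens.tensmx D A.
Proof. by apply/matrixP => i j; rewrite !mxE mulrCA. Qed.

Lemma tensNr m n p q (A : 'M[C]_(m,n)) (D : 'M[C]_(p,q)) :
  mxtens.tensmx D (- A) = - mxtens.tensmx D A.
Proof. by apply/matrixP => i j; rewrite !mxE mulrN. Qed.

Section W.
Variables (n n' : nat) (U : 'M[C]_(n', n)).
Hypothesis hU1 : U *m adj U = 1%:M.
Hypothesis hU2 : adj U *m U = 1%:M.
Let S := pmx (@swap_ix n' n).
Let S' := pmx (@swap_ix n n').
Definition Wmx := S *m mxtens.tensmx U (adj U).

Lemma adjS : adj S = S'.
Proof. exact: adj_pmx (@swapK _ _) (@swapK _ _). Qed.

Lemma S_conj (X : 'M[C]_n') (Y : 'M[C]_n) :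
  S *m mxtens.tensmx X Y *m S' = mxtens.tensmx Y X.
Proof.
apply/matrixP => i j.
rewrite (mul_pmx (@swapK _ _) (@swapK _ _)) pmx_mull.
case: (mxtens.mxtens_indexP i) => a b; case: (mxtens.mxtens_indexP j) => a' b'.
by rewrite !swap_idx !mxtens.tensmxE mulrC.
Qed.

Lemma SS' : S *m S' = 1%:M. Proof. exact: pmx_unit (@swapK _ _) (@swapK _ _). Qed.
Lemma S'S : S' *m S = 1%:M. Proof. exact: pmx_unit (@swapK _ _) (@swapK _ _). Qed.

Lemma S_comm (X : 'M[C]_n') (Y : 'M[C]_n) :
  S *m mxtens.tensmx X Y = mxtens.tensmx Y X *m S.
Proof. by rewrite -S_conj -!mulmxA S'S mulmx1. Qed.

Lemma adjW : adj Wmx = mxtens.tensmx (adj U) U *m S'.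
Proof. by rewrite /Wmx adj_mul adjS adj_tens adjK. Qed.

Lemma W_conj (P : 'M[C]_n) (Q : 'M[C]_n') :
  Wmx *m tens P Q *m adj Wmx = tens (adj U *m Q *m U) (U *m P *m adj U).
Proof.
rewrite adjW /Wmx /tens.
set T1 := mxtens.tensmx U (adj U); set T3 := mxtens.tensmx (adj U) U.
have -> : S *m T1 *m mxtens.tensmx P Q *m (T3 *m S') =
   S *m (T1 *m mxtens.tensmx P Q *m T3) *m S' by rewrite !mulmxA.
by rewrite /T1 /T3 !tens_mul S_conj.
Qed.

Lemma W_unitary : unitary_op Wmx.
Proof.
split.
  by rewrite adjW /Wmx -mulmxA (mulmxA (mxtens.tensmx _ _)) tens_mul hU1 hU2 tens11 mul1mx SS'.
rewrite adjW /Wmx !mulmxA -(mulmxA _ S' S) S'S mulmx1 tens_mul hU1 hU2 tens11 //.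
Qed.

Lemma W_comm (H1 : 'M[C]_n) (H2 : 'M[C]_n') (c : C) :
  U *m H1 = (H2 + c%:M) *m U ->
  Wmx *m (tens H1 1%:M + tens 1%:M H2) = (tens H1 1%:M + tens 1%:M H2) *m Wmx.
Proof.
move=> hH.
have hH' : adj U *m H2 = (H1 - c%:M) *m adj U.
  have : adj U *m (U *m H1) *m adj U = adj U *m ((H2 + c%:M) *m U) *m adj U by rewrite hH.
  rewrite !mulmxA hU2 mul1mx -!mulmxA hU1 mulmx1 mulmxDr mul_mx_scalar => e.
  by rewrite mulmxBl e mul_scalar_mx addrK.
rewrite /Wmx /tens -mulmxA !mulmxDr !tens_mul hH hH' !mulmx1.
rewrite !mulmxDl !mulmxA -!S_comm -!mulmxA !tens_mul ?mulmx1 ?mul1mx.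
rewrite mulNmx !mul_scalar_mx tensDl tensDr tensNr tensZl tensZr !mulmxDr mulmxN -!scalemxAr.
rewrite addrC -!addrA; congr (_ + _); by rewrite addrCA addNr addr0.
Qed.
End W.

Lemma sum_pos n (F : 'I_n -> R) : (0 < n)%N -> (forall i, 0 < F i) -> 0 < \sum_i F i.
Proof.
move=> n0 hF; rewrite (bigD1 (Ordinal n0)) //=.
by apply: ltr_wpDr; [apply: sumr_ge0 => i _; exact: ltW | exact: hF].
Qed.

Lemma atom_spec (beta : R) (X : hsys R) :
  exists (P P' : 'M[C]_(hdim X)) (h : 'I_(hdim X) -> R) (z : R),
  [/\ P *m P' = 1%:M /\ P' *m P = 1%:M, 0 < z,
      hmat X = P' *m diag_mx (\row_i (h i)%:C) *m P,
      gibbs_of beta (Atom X) = P' *m diag_mx (\row_i (expR (- beta * h i) / z)%:C) *m P &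
      \tr (gibbs_of beta (Atom X)) = 1].
Proof.
set H := hmat X; set P := spectralmx H; set d := spectral_diag H.
have Pu : P \in unitmx by exact: spectral_unit.
have hdr : forall i, d 0 i = (complex.Re (d 0 i))%:C.
  move=> i; apply: real_C.
  by have /mxOverP := hermitian_spectral_diag_real (hmat_herm X); apply.
have eH : H = invmx P *m diag_mx (\row_i (complex.Re (d 0 i))%:C) *m P.
  have /orthomx_spectralP e := hermitian_normalmx (hmat_herm X).
  rewrite /H {1}e -/H -/P -/d.
  by congr (_ *m diag_mx _ *m _); apply/matrixP => i j; rewrite (ord1 i) !mxE -hdr.
set z := \sum_i expR (- beta * complex.Re (d 0 i)).
have z0 : 0 < z by apply: sum_pos; [exact: hdim_gt0 | move=> i; exact: expR_gt0].
have trE : \tr (expmbeta beta H) = z%:C.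
  rewrite /expmbeta -/P -/d mxtrace_mulC mulmxA mulmxV // mul1mx mxtrace_diag.
  by rewrite rmorph_sum; apply: eq_bigr => i _; rewrite mxE.
exists P, (invmx P), (fun i => complex.Re (d 0 i)), z; split => //.
- by split; [exact: mulmxV | exact: mulVmx].
- rewrite /gibbs_of /= /gibbs -/H trE /expmbeta -/P -/d.
  have -> : diag_mx (\row_i (expR (- beta * complex.Re (d 0 i)) / z)%:C) =
     (z%:C)^-1 *: diag_mx (\row_i (expR (- beta * complex.Re (d 0 i)))%:C).
    apply/matrixP => i j; rewrite !mxE rmorphM fmorphV mulrC.
    by case: (i == j); rewrite ?mulr1n ?mulr0n ?mulr0.
  by rewrite -scalemxAr -scalemxAl.
- rewrite /gibbs_of /= /gibbs -/H trE mxtraceZ -/H trE mulVf //.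
  by rewrite (inj_eq (@complexI _)) gt_eqF.
Qed.

Lemma intertw m n (U : 'M[C]_(n,m)) (Q Q' : 'M[C]_m) (P P' : 'M[C]_n)
  (a a2 : 'I_m -> C) (b b2 : 'I_n -> C) (f : C -> C) :
  Q *m Q' = 1%:M -> Q' *m Q = 1%:M -> P *m P' = 1%:M -> P' *m P = 1%:M ->
  (forall i, a2 i = f (a i)) -> (forall j, b2 j = f (b j)) ->
  U *m (Q' *m diag_mx (\row_i a i) *m Q) = (P' *m diag_mx (\row_j b j) *m P) *m U ->
  U *m (Q' *m diag_mx (\row_i a2 i) *m Q) = (P' *m diag_mx (\row_j b2 j) *m P) *m U.
Proof.
move=> hQ hQ' hP hP' ha hb e.
set V := P *m U *m Q'.
have eV : V *m diag_mx (\row_i a i) = diag_mx (\row_j b j) *m V.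
  have e2 : P *m (U *m (Q' *m diag_mx (\row_i a i) *m Q)) *m Q' =
            P *m ((P' *m diag_mx (\row_j b j) *m P) *m U) *m Q' by rewrite e.
  rewrite !mulmxA -(mulmxA _ Q Q') hQ mulmx1 hP mul1mx in e2.
  by rewrite /V e2 !mulmxA.
have eU : U = P' *m V *m Q.
  by rewrite /V !mulmxA hP' mul1mx -mulmxA hQ' mulmx1.
clearbody V.
have eV2 : V *m diag_mx (\row_i a2 i) = diag_mx (\row_j b2 j) *m V.
  apply/matrixP => i j; move/matrixP: eV => /(_ i j).
  rewrite !mul_mx_diag (mul_diag_mx (\row_j b j)) (mul_diag_mx (\row_j b2 j)) !mxE ha hb.
  have [->|nz] := eqVneq (V i j) 0; first by move=> _; rewrite mulr0 mul0r.
  by rewrite mulrC => /(mulIf nz) ->; rewrite mulrC.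
rewrite eU !mulmxA -(mulmxA _ Q Q') hQ mulmx1 -(mulmxA _ P P') hP mulmx1.
by rewrite -(mulmxA P' V) eV2 !mulmxA.
Qed.

Lemma comp_spec (beta : R) (A B : hsys R) :
  exists (Q Q' : 'M[C]_(hdim A * hdim B)) (h : 'I_(hdim A * hdim B) -> R) (z : R),
  [/\ Q *m Q' = 1%:M /\ Q' *m Q = 1%:M, 0 < z,
      ham (Pair (Atom A) (Atom B)) = Q' *m diag_mx (\row_k (h k)%:C) *m Q,
      tens (gibbs_of beta (Atom A)) (gibbs_of beta (Atom B)) =
        Q' *m diag_mx (\row_k (expR (- beta * h k) / z)%:C) *m Q &
      \tr (tens (gibbs_of beta (Atom A)) (gibbs_of beta (Atom B))) = 1].
Proof.
have [PA [PA' [hA [zA [[uA uA'] zA0 eHA eGA trA]]]]] := atom_spec beta A.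
have [PB [PB' [hB [zB [[uB uB'] zB0 eHB eGB trB]]]]] := atom_spec beta B.
exists (mxtens.tensmx PA PB), (mxtens.tensmx PA' PB'),
  (fun k => hA (unidx k).1 + hB (unidx k).2), (zA * zB); split.
- by split; rewrite tens_mul ?uA ?uB ?uA' ?uB' tens11.
- exact: mulr_gt0.
- rewrite /= eHA eHB /tens.
  set DA := diag_mx _; set DB := diag_mx _.
  have t1 : mxtens.tensmx (PA' *m DA *m PA) (1%:M : 'M_(hdim B)) =
     mxtens.tensmx PA' PB' *m mxtens.tensmx DA (diag_mx (const_mx 1)) *m mxtens.tensmx PA PB.
    by rewrite !tens_mul diag_const_mx mulmx1 uB'.
  have t2 : mxtens.tensmx (1%:M : 'M_(hdim A)) (PB' *m DB *m PB) =
     mxtens.tensmx PA' PB' *m mxtens.tensmx (diag_mx (const_mx 1)) DB *m mxtens.tensmx PA PB.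
    by rewrite !tens_mul diag_const_mx mulmx1 uA'.
  rewrite t1 t2 -mulmxDl -mulmxDr !diag_tens -raddfD /=.
  congr (_ *m diag_mx _ *m _); apply/matrixP => i k; rewrite !mxE rmorphD.
  by rewrite mulr1 mul1r.
- rewrite eGA eGB /tens -!tens_mul diag_tens.
  congr (_ *m diag_mx _ *m _); apply/matrixP => i k; rewrite !mxE -rmorphM.
  by rewrite mulf_div mulrDr expRD.
- by rewrite tr_tens trA trB mulr1.
Qed.

Lemma diag_shift m (Q Q' : 'M[C]_m) (h : 'I_m -> R) (c : R) : Q' *m Q = 1%:M ->
  Q' *m diag_mx (\row_k (h k + c)%:C) *m Q = Q' *m diag_mx (\row_k (h k)%:C) *m Q + (c%:C)%:M.
Proof.
move=> uQ.
have -> : diag_mx (\row_k (h k + c)%:C) = diag_mx (\row_k (h k)%:C) + (c%:C)%:M.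
  by apply/matrixP => i j; rewrite !mxE rmorphD mulrnDl.
by rewrite mulmxDr mulmxDl mul_mx_scalar -scalemxAl uQ scalemx1.
Qed.
End H.

Theorem lemma1 (R : realType) (beta : R) (hbeta : 0 < beta)
  (A B A' B' : hsys R)
  (hdimAB : (hdim A * hdim B = hdim A' * hdim B')%N)
  (U : 'M[R[i]]_(hdim A' * hdim B', hdim A * hdim B))
  (hU : unitary_op U)
  (hGibbs : U *m tens (gibbs_of beta (Atom A)) (gibbs_of beta (Atom B)) *m adj U
            = tens (gibbs_of beta (Atom A')) (gibbs_of beta (Atom B'))) :
  exists N : 'M[R[i]]_(hdim A) -> 'M[R[i]]_(hdim A'),
    thermal_op beta (Atom A) (Atom A') N /\
    forall omega : 'M[R[i]]_(hdim A), is_state omega ->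
      N omega = ptrace2 (U *m tens omega (gibbs_of beta (Atom B)) *m adj U).
Proof.
have [hU1 hU2] := hU.
have [Q [Q' [h [z [[uQ uQ'] z0 eH1 eG1 trG1]]]]] := comp_spec beta A B.
have [Q2 [Q2' [h2 [z2 [[uQ2 uQ2'] z20 eH2 eG2 trG2]]]]] := comp_spec beta A' B'.
have hI : U *m tens (gibbs_of beta (Atom A)) (gibbs_of beta (Atom B)) =
          tens (gibbs_of beta (Atom A')) (gibbs_of beta (Atom B')) *m U.
  by rewrite -hGibbs -!mulmxA hU2 mulmx1.
rewrite eG1 eG2 in hI.
have beta0 : beta != 0 by rewrite gt_eqF.
have key := intertw (f := fun w => (- ln (complex.Re w) / beta)%:C)
  (a2 := fun k => (h k + ln z / beta)%:C) (b2 := fun k => (h2 k + ln z2 / beta)%:C)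
  uQ uQ' uQ2 uQ2' _ _ hI.
have fE : forall (x zz : R), 0 < zz ->
    (x + ln zz / beta)%:C = (- ln (complex.Re (expR (- beta * x) / zz)%:C) / beta)%:C.
  move=> x zz zz0; congr (_ %:C); rewrite /= ln_div ?expRK ?posrE ?expR_gt0 //.
  by field.
have {key} key := key (fun k => fE _ _ z0) (fun k => fE _ _ z20).
rewrite !diag_shift // -eH1 -eH2 in key.
have hc : U *m ham (Pair (Atom A) (Atom B)) =
   (ham (Pair (Atom A') (Atom B')) + ((ln z2 / beta)%:C - (ln z / beta)%:C)%:M) *m U.
  move: key; rewrite mulmxDr mulmxDl !mul_mx_scalar !mul_scalar_mx => key.
  apply: (addIr ((ln z / beta)%:C *: U)); rewrite key.
  by rewrite /= !mulmxDl mul_scalar_mx scalerBl -!addrA addNr addr0.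
pose W := Wmx U.
have Wu : unitary_op W := W_unitary hU1 hU2.
have Wc := W_comm hU1 hU2 hc.
have TC := @thermal_cons R beta.
have t1 := TC _ _ _ _ _ (thermal_id R beta (Atom A)) (step_append R beta (Atom A) (Atom B)).
have t2 := TC _ _ _ _ _ t1 (step_append R beta (Pair (Atom A) (Atom B)) (Atom A')).
have t3 := TC _ _ _ _ _ t2 (step_append R beta (Pair (Pair (Atom A) (Atom B)) (Atom A')) (Atom B')).
have t4 := TC _ _ _ _ _ t3 (step_assoc R beta (Pair (Atom A) (Atom B)) (Atom A') (Atom B')).
have t5 := TC _ _ _ _ _ t4 (step_unitary R beta
   (Pair (Pair (Atom A) (Atom B)) (Pair (Atom A') (Atom B'))) W Wu Wc).
have t6 := TC _ _ _ _ _ t5 (step_trace1 R beta (Pair (Atom A) (Atom B)) (Pair (Atom A') (Atom B'))).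
have t7 := TC _ _ _ _ _ t6 (step_trace2 R beta (Atom A') (Atom B')).
eexists; split; first exact: t7.
move=> omega _ /=.
rewrite assoc_tens /W W_conj ptrace1_tens mxtrace_mulC mulmxA hU1 mul1mx trG2 scale1r.
by [].
Qed.
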